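(* Let $V$ be a real vector space of finite even dimension $n$ with a quadratic form $Q$ of anti-Lorentz signature $(1,n-1)$, and let $\rho$ be a $c$-compatible irreducible representation of $\mathbb{C}l(V)$ on a finite-dimensional complex vector space $K$ with nondegenerate hermitian form $(\cdot,\cdot)$. Let $K=K_L\oplus K_R$ where $K_L$ (resp. $K_R$) is the $-1$ (resp. $+1$) eigenspace of the chirality operator $\chi$. Let $w\in V$ be a nonzero spacelike vector and $(\psi,\phi)_w:=(\psi,\rho(w)\phi)$. Then $K_L$ and $K_R$ are orthogonal to each other for $(\cdot,\cdot)_w$, and if $n>2$, the restriction of $(\cdot,\cdot)_w$ to each of $K_L$ and $K_R$ is neutral.
   Context: $Cl(V,Q)$ is the real Clifford algebra with $v^2=+Q(v)$, $\mathbb{C}l(V)$ its complexification with complex conjugation $c$, $T$ the linear antiautomorphism restricting to the identity on $V$, $a^\times=c(T(a))$. $\rho$ is $c$-compatible if $(\rho(a)\psi,\phi)=(\psi,\rho(a^\times)\phi)$. In the anti-Lorentzian setting a vector $v$ is timelike if $Q(v)>0$ and spacelike if $Q(v)<0$. The chirality operator is $\chi=(-i)^{n/2+q}\rho(\omega)$ with $q=n-1$ and $\omega=e_1\cdots e_n$ the volume element of a pseudo-orthonormal basis of $V$. A hermitian form is neutral if its positive and negative indices of inertia are equal. *)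

(* Defs.v *)
From HB Require Import structures.
From mathcomp Require Import all_boot all_order all_algebra.
From mathcomp Require Import reals.
From mathcomp Require Import complex.
Set Implicit Arguments. Unset Strict Implicit. Unset Printing Implicit Defensive.
Import Order.TTheory GRing.Theory Num.Theory.
Local Open Scope ring_scope.
Local Open Scope complex_scope.

Section CliffordDefs.
Variable R : realType.
Local Notation C := (R[i]).

Definition quadf n (G : 'M[R]_n) (v : 'rV[R]_n) : R := (v *m G *m v^T) 0 0.

(* Signature (1, n-1): the rows of an invertible matrix E form a
   pseudo-orthonormal basis: Q(e_0) = 1, Q(e_i) = -1 (i > 0), pairwise orthogonal. *)
Definition antiLorentz_diag n : 'M[R]_n :=
  diag_mx (\row_(i < n) (if (i : nat) == 0%N then 1 else -1)).
Definition pseudo_orthonormal_basis n (G E : 'M[R]_n) : Prop :=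
  E \in unitmx /\ E *m G *m E^T = antiLorentz_diag n.

(* An R-linear map rho : V -> End_C(K), K = C^m (column vectors), determined by
   the images Gam j of the standard basis vectors of R^n. *)
Definition cliff_rho n m (Gam : 'I_n -> 'M[C]_m) (v : 'rV[R]_n) : 'M[C]_m :=
  \sum_(j < n) (v 0 j)%:C *: Gam j.

Definition cliff_mono n m (Gam : 'I_n -> 'M[C]_m) (vs : seq 'rV[R]_n) : 'M[C]_m :=
  \prod_(v <- vs) cliff_rho Gam v.

(* rho extends to a representation of Cl(V,Q) (complexified): v^2 = Q(v). *)
Definition cliff_rep n m (G : 'M[R]_n) (Gam : 'I_n -> 'M[C]_m) : Prop :=
  forall v : 'rV[R]_n, cliff_rho Gam v * cliff_rho Gam v = (quadf G v)%:C%:M.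

Definition hform m (H : 'M[C]_m) (psi phi : 'cV[C]_m) : C :=
  ((map_mx conjc psi)^T *m H *m phi) 0 0.
Definition hermitian_mx m (H : 'M[C]_m) : Prop := (map_mx conjc H)^T = H.
Definition nondeg_herm m (H : 'M[C]_m) : Prop := hermitian_mx H /\ H \in unitmx.

(* c-compatibility: (rho(a) psi, phi) = (psi, rho(a^x) phi) for all a in Cl(V)_C.
   Cl(V)_C is spanned over C by products a = v_1...v_k of vectors, and
   (v_1...v_k)^x = c(T(v_1...v_k)) = v_k...v_1 (T antiautomorphism fixing V,
   c fixing the real vectors), with (z a)^x = conj(z) a^x; so the condition is
   exactly the following on the spanning monomials. *)
Definition c_compatible n m (Gam : 'I_n -> 'M[C]_m) (H : 'M[C]_m) : Prop :=
  forall (vs : seq 'rV[R]_n) (psi phi : 'cV[C]_m),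
    hform H (cliff_mono Gam vs *m psi) phi = hform H psi (cliff_mono Gam (rev vs) *m phi).

(* A subspace is encoded as the row space of U (rows = transposed vectors of K);
   invariance under the algebra generated by rho(V) is invariance under rho(V). *)
Definition cliff_irreducible n m (Gam : 'I_n -> 'M[C]_m) : Prop :=
  (0 < m)%N /\ forall U : 'M[C]_m,
    (forall v : 'rV[R]_n, (U *m (cliff_rho Gam v)^T <= U)%MS) ->
    \rank U = 0%N \/ row_full U.

(* Chirality operator chi = (-i)^(n/2 + q) rho(e_1 ... e_n), q = n - 1,
   where e_k = row k of E (pseudo-orthonormal basis). *)
Definition chirality n m (Gam : 'I_n -> 'M[C]_m) (E : 'M[R]_n) : 'M[C]_m :=
  (- 'i) ^+ (n./2 + (n - 1)) *: \prod_(k < n) cliff_rho Gam (row k E).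

(* Eigenspace {psi | A psi = c psi}, encoded as a row space (rows = psi^T). *)
Definition eigsp m (A : 'M[C]_m) (c : C) : 'M[C]_m := kermx (A - c%:M)^T.

Definition posdef_on m (f : 'cV[C]_m -> 'cV[C]_m -> C) (U : 'M[C]_m) : Prop :=
  forall x : 'rV[C]_m, (x <= U)%MS -> x != 0 -> 0 < f x^T x^T.
Definition negdef_on m (f : 'cV[C]_m -> 'cV[C]_m -> C) (U : 'M[C]_m) : Prop :=
  forall x : 'rV[C]_m, (x <= U)%MS -> x != 0 -> f x^T x^T < 0.

Definition pos_index m (f : 'cV[C]_m -> 'cV[C]_m -> C) (S : 'M[C]_m) (p : nat) : Prop :=
  (exists U : 'M[C]_m, (U <= S)%MS /\ \rank U = p /\ posdef_on f U) /\
  (forall U : 'M[C]_m, (U <= S)%MS -> posdef_on f U -> (\rank U <= p)%N).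
Definition neg_index m (f : 'cV[C]_m -> 'cV[C]_m -> C) (S : 'M[C]_m) (p : nat) : Prop :=
  (exists U : 'M[C]_m, (U <= S)%MS /\ \rank U = p /\ negdef_on f U) /\
  (forall U : 'M[C]_m, (U <= S)%MS -> negdef_on f U -> (\rank U <= p)%N).

Definition neutral_on m (f : 'cV[C]_m -> 'cV[C]_m -> C) (S : 'M[C]_m) : Prop :=
  exists p : nat, pos_index f S p /\ neg_index f S p.

End CliffordDefs.

(* Main.v *)
Require Import Defs.
From HB Require Import structures.
From mathcomp Require Import all_boot all_order all_algebra.
From mathcomp Require Import reals.
From mathcomp Require Import complex.
From mathcomp Require Import ring lra.
From Stdlib Require Import Classical.
Set Implicit Arguments. Unset Strict Implicit. Unset Printing Implicit Defensive.
Import Order.TTheory GRing.Theory Num.Theory.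
Local Open Scope ring_scope.


Lemma sign_comm (Rg : pzRingType) (c : nat) (x : Rg) : (-1) ^+ c * x = x * (-1) ^+ c.
Proof. by rewrite -signr_odd; case: (odd c); rewrite ?expr1 ?expr0 ?mulN1r ?mulrN1 ?mul1r ?mulr1. Qed.

Lemma prod_anti (Rg : pzRingType) (I : eqType) (f : I -> Rg) (j : I) (s : seq I) :
  (forall k, k != j -> f j * f k = - (f k * f j)) ->
  f j * \prod_(k <- s) f k = (-1) ^+ (count (fun k => k != j) s) * (\prod_(k <- s) f k * f j).
Proof.
move=> hf; elim: s => [|k s IH]; first by rewrite !big_nil mul1r mulr1 expr0 mul1r.
rewrite !big_cons /=; have [ekj|nkj] := eqVneq k j.
  by rewrite ekj /= add0n [in LHS]IH mulrA -sign_comm -!mulrA.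
rewrite /= add1n exprS mulrA hf // !mulNr mul1r; congr (- _).
by rewrite -mulrA IH [in LHS]mulrA -(sign_comm _ (f k)) -!mulrA.
Qed.

Lemma prod_rev (Rg : pzRingType) (I : eqType) (f : I -> Rg) (s : seq I) :
  uniq s -> (forall j k, j != k -> f j * f k = - (f k * f j)) ->
  \prod_(k <- rev s) f k = (-1) ^+ 'C(size s, 2) * \prod_(k <- s) f k.
Proof.
move=> + hf; elim: s => [|k s IH]; first by rewrite !big_nil expr0 mul1r.
rewrite /= => /andP[ks us]; rewrite rev_cons -cats1 big_cat big_seq1 /= IH // big_cons.
have cnt : count (fun x => x != k) s = size s.
  apply/eqP; rewrite -all_count; apply/allP => x xs; apply/negP => /eqP exk.
  by rewrite -exk xs in ks.
rewrite prod_anti; last by move=> x xk; apply: hf; rewrite eq_sym.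
rewrite cnt binS bin1 exprD !mulrA -!exprD -[in RHS]signr_odd !oddD addbK signr_odd.
by [].
Qed.


Lemma max_exists (P : nat -> Prop) m : P 0%N -> (forall p, P p -> (p <= m)%N) ->
  exists p, P p /\ forall q, P q -> (q <= p)%N.
Proof.
move=> P0 hb; apply: NNPP => hno.
have grow : forall k, exists p, P p /\ (k <= p)%N.
  elim=> [|k IH]; first by exists 0%N.
  case: IH => p [Pp kp].
  have : ~ (forall q, P q -> (q <= p)%N) by move=> hq; apply: hno; exists p.
  move/not_all_ex_not => [q hq]; have [Pq nqp] := imply_to_and _ _ hq.
  exists q; split => //; rewrite ltnNge; apply/negP => h; apply: nqp.
  exact: leq_trans h kp.
have [p [Pp hp]] := grow m.+1; have := hb _ Pp.
by rewrite leqNgt hp.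
Qed.

Lemma transfer (R : realType) m (U a : 'M[R[i]]_m) (x : 'rV[R[i]]_m) :
  (x <= U *m a^T)%MS -> x != 0 ->
  exists y : 'rV[R[i]]_m, [/\ (y <= U)%MS, y != 0 & x = y *m a^T].
Proof.
move=> /submxP [D ->] nz; exists (D *m U); split.
- exact: submxMl.
- by apply: contraNneq nz => e; rewrite mulmxA e mul0mx.
- by rewrite mulmxA.
Qed.

Lemma neutral_gen (R : realType) m (f : 'cV[R[i]]_m -> 'cV[R[i]]_m -> R[i])
  (S a : 'M[R[i]]_m) (lam : R[i]) :
  lam < 0 -> a \in unitmx ->
  (forall U : 'M[R[i]]_m, (U <= S)%MS -> (U *m a^T <= S)%MS) ->
  (forall y : 'rV_m, f (y *m a^T)^T (y *m a^T)^T = lam * f y^T y^T) ->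
  neutral_on f S.
Proof.
move=> hl ua hS hf.
have rk : forall U : 'M_m, \rank (U *m a^T) = \rank U.
  by move=> U; rewrite mxrankMfree // row_free_unit unitmx_tr.
have pn : forall U, posdef_on f U -> negdef_on f (U *m a^T).
  move=> U hU x /transfer h /h [y [yU y0 ->]].
  by rewrite hf nmulr_rlt0 // hU.
have np : forall U, negdef_on f U -> posdef_on f (U *m a^T).
  move=> U hU x /transfer h /h [y [yU y0 ->]].
  by rewrite hf nmulr_rgt0 // hU.
pose P := fun p => exists U : 'M[R[i]]_m, (U <= S)%MS /\ \rank U = p /\ posdef_on f U.
have P0 : P 0%N.
  exists 0; split; first exact: sub0mx.
  split; first exact: mxrank0.
  by move=> x; rewrite submx0 => /eqP ->; rewrite eqxx.
have Pb : forall p, P p -> (p <= m)%N by move=> p [U [_ [<- _]]]; exact: rank_leq_row.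
have [p [[U0 [U0S [rU0 pU0]]] hp]] := max_exists P0 Pb.
exists p; split; split.
- by exists U0.
- by move=> U US pU; apply: hp; exists U.
- by exists (U0 *m a^T); split; [exact: hS | split; [rewrite rk | exact: pn]].
- move=> U US nU; rewrite -rk; apply: hp; exists (U *m a^T); split; first exact: hS.
  by split; last exact: np.
Qed.


Lemma alg5 (R : realType) m (A B : 'M[R[i]]_m) (x y : R[i]) :
  A *m A = x%:M -> B *m B = y%:M -> A *m B = - (B *m A) ->
  B *m A *m (A *m (A *m B)) = (- (x * y)) *: A.
Proof.
move=> hA hB hAB.
rewrite !mulmxA -(mulmxA B A A) hA mul_mx_scalar -!scalemxAl -mulmxA hAB.
by rewrite mulmxN mulmxA hB mul_scalar_mx scalerN scalerA scaleNr.
Qed.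

Lemma alg_sq (R : realType) m (A B : 'M[R[i]]_m) (x y : R[i]) :
  A *m A = x%:M -> B *m B = y%:M -> A *m B = - (B *m A) ->
  (A *m B) *m (A *m B) = (- (x * y))%:M.
Proof.
move=> hA hB hAB.
have hBA : B *m A = - (A *m B) by rewrite hAB opprK.
rewrite mulmxA -(mulmxA A B A) hBA mulmxN mulNmx mulmxA hA -mulmxA hB -scalar_mxM.
by rewrite raddfN.
Qed.


Local Open Scope complex_scope.

Definition bil (R : realType) n (G : 'M[R]_n) (u v : 'rV[R]_n) : R := (u *m G *m v^T) 0 0.

Lemma quadf_bil (R : realType) n (G : 'M[R]_n) u : quadf G u = bil G u u.
Proof. by []. Qed.

Lemma bilD1 (R : realType) n (G : 'M[R]_n) u v w : bil G (u + v) w = bil G u w + bil G v w.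
Proof. by rewrite /bil !mulmxDl mxE. Qed.
Lemma bilD2 (R : realType) n (G : 'M[R]_n) u v w : bil G w (u + v) = bil G w u + bil G w v.
Proof. by rewrite /bil linearD /= mulmxDr mxE. Qed.
Lemma bilZ1 (R : realType) n (G : 'M[R]_n) a u w : bil G (a *: u) w = a * bil G u w.
Proof. by rewrite /bil -!scalemxAl mxE. Qed.
Lemma bilZ2 (R : realType) n (G : 'M[R]_n) a u w : bil G w (a *: u) = a * bil G w u.
Proof. by rewrite /bil linearZ /= -scalemxAr mxE. Qed.
Lemma bilN1 (R : realType) n (G : 'M[R]_n) u w : bil G (- u) w = - bil G u w.
Proof. by rewrite -scaleN1r bilZ1 mulN1r. Qed.
Lemma bilN2 (R : realType) n (G : 'M[R]_n) u w : bil G w (- u) = - bil G w u.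
Proof. by rewrite -scaleN1r bilZ2 mulN1r. Qed.
Lemma bilC (R : realType) n (G : 'M[R]_n) u w : G^T = G -> bil G u w = bil G w u.
Proof.
move=> hG; rewrite /bil -[in LHS](trmxK (u *m G *m w^T)) mxE.
by rewrite !trmx_mul trmxK hG mulmxA.
Qed.

Lemma rhoD (R : realType) n m (Gam : 'I_n -> 'M[R[i]]_m) u v :
  cliff_rho Gam (u + v) = cliff_rho Gam u + cliff_rho Gam v.
Proof.
rewrite /cliff_rho -big_split /=; apply: eq_bigr => j _.
by rewrite mxE rmorphD scalerDl.
Qed.

Lemma rhoZ (R : realType) n m (Gam : 'I_n -> 'M[R[i]]_m) a u :
  cliff_rho Gam (a *: u) = a%:C *: cliff_rho Gam u.
Proof.
rewrite /cliff_rho scaler_sumr; apply: eq_bigr => j _.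
by rewrite mxE rmorphM scalerA.
Qed.

Lemma rho_comb (R : realType) n m (Gam : 'I_n -> 'M[R[i]]_m) (x : 'rV[R]_n) (E : 'M[R]_n) :
  cliff_rho Gam (x *m E) = \sum_(k < n) (x 0 k)%:C *: cliff_rho Gam (row k E).
Proof.
rewrite /cliff_rho.
under eq_bigr do rewrite mxE rmorph_sum scaler_suml.
rewrite exchange_big /=; apply: eq_bigr => k _; rewrite scaler_sumr.
by apply: eq_bigr => j _; rewrite !mxE rmorphM scalerA.
Qed.

Lemma polar (R : realType) n m (G : 'M[R]_n) (Gam : 'I_n -> 'M[R[i]]_m) u v :
  cliff_rep G Gam ->
  cliff_rho Gam u * cliff_rho Gam v + cliff_rho Gam v * cliff_rho Gam u
  = (bil G u v + bil G v u)%:C%:M.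
Proof.
move=> hr; have := hr (u + v).
have -> : quadf G (u + v) = (quadf G u + quadf G v) + (bil G u v + bil G v u).
  by rewrite !quadf_bil bilD1 !bilD2; ring.
rewrite rhoD mulrDl !mulrDr !rmorphD /= -hr -(hr v).
set a := cliff_rho Gam u; set b := cliff_rho Gam v.
move=> h; apply: (addrI (a * a + b * b)); rewrite -h.
by rewrite addrACA (addrC (b * b)).
Qed.

Lemma bil_rows (R : realType) n (G E : 'M[R]_n) j k :
  pseudo_orthonormal_basis G E ->
  bil G (row j E) (row k E) = if j == k then (if (j : nat) == 0%N then 1 else -1) else 0.
Proof.
case=> _ hE; rewrite /bil.
have -> : (row j E *m G *m (row k E)^T) 0 0 = (E *m G *m E^T) j k.
  by rewrite -row_mul tr_row !mxE; apply: eq_bigr => l _; rewrite !mxE.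
rewrite hE /antiLorentz_diag !mxE; by case: (j == k); rewrite ?mulr1n ?mulr0n.
Qed.

Lemma size_ie n : size (index_enum 'I_n) = n.
Proof. by rewrite /index_enum unlock -enumT -cardT card_ord. Qed.

Lemma count_ie n (j : 'I_n) : count (fun k => k != j) (index_enum 'I_n) = n.-1.
Proof.
have h := count_predC (pred1 j) (index_enum 'I_n).
rewrite count_uniq_mem ?index_enum_uniq // mem_index_enum in h.
have s := size_ie n.
move: h s; move: (count _ _) (size _) => c z h s.
by rewrite -s -h add1n.
Qed.

Definition omega (R : realType) n m (Gam : 'I_n -> 'M[R[i]]_m) (E : 'M[R]_n) :=
  \prod_(k < n) cliff_rho Gam (row k E).

Lemma anti_e (R : realType) n m (G E : 'M[R]_n) (Gam : 'I_n -> 'M[R[i]]_m) j k :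
  cliff_rep G Gam -> pseudo_orthonormal_basis G E -> j != k ->
  cliff_rho Gam (row j E) * cliff_rho Gam (row k E) =
  - (cliff_rho Gam (row k E) * cliff_rho Gam (row j E)).
Proof.
move=> hr hb njk; apply/eqP; rewrite -addr_eq0 (polar _ _ hr) !bil_rows //.
case: (j =P k) njk => [->|njk' _]; first by rewrite eqxx. case: (k =P j) => [ekj|_]; first by case: njk'. by rewrite addr0 !raddf0.
Qed.

Lemma e_omega (R : realType) n m (G E : 'M[R]_n) (Gam : 'I_n -> 'M[R[i]]_m) j :
  (0 < n)%N -> ~~ odd n ->
  cliff_rep G Gam -> pseudo_orthonormal_basis G E ->
  cliff_rho Gam (row j E) * omega Gam E = - (omega Gam E * cliff_rho Gam (row j E)).
Proof.
move=> n0 ev hr hb; rewrite /omega.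
rewrite (@prod_anti _ _ (fun k => cliff_rho Gam (row k E)) j); last first.
  by move=> k hk; apply: anti_e => //; rewrite eq_sym.
rewrite count_ie -signr_odd.
have -> : odd n.-1 by move: n0 ev; case: (n) => [//|n'] _ /=; rewrite negbK.
by rewrite expr1 mulN1r.
Qed.

Lemma v_omega (R : realType) n m (G E : 'M[R]_n) (Gam : 'I_n -> 'M[R[i]]_m) v :
  (0 < n)%N -> ~~ odd n ->
  cliff_rep G Gam -> pseudo_orthonormal_basis G E ->
  cliff_rho Gam v * omega Gam E = - (omega Gam E * cliff_rho Gam v).
Proof.
move=> n0 ev hr hb; have hE := hb.1.
rewrite -(mulmxKV hE v) rho_comb mulr_suml mulr_sumr -sumrN; apply: eq_bigr => k _.
rewrite -!mulmxE -scalemxAl.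
have := e_omega k n0 ev hr hb; rewrite -!mulmxE => ->.
by rewrite scalerN scalemxAr.
Qed.

Lemma v_chi (R : realType) n m (G E : 'M[R]_n) (Gam : 'I_n -> 'M[R[i]]_m) v :
  (0 < n)%N -> ~~ odd n ->
  cliff_rep G Gam -> pseudo_orthonormal_basis G E ->
  cliff_rho Gam v * chirality Gam E = - (chirality Gam E * cliff_rho Gam v).
Proof.
move=> n0 ev hr hb; rewrite /chirality -/(omega Gam E).
rewrite -!mulmxE -scalemxAr.
have := v_omega v n0 ev hr hb; rewrite -!mulmxE => ->.
by rewrite scalerN scalemxAl.
Qed.

Lemma hformZl (R : realType) m (H : 'M[R[i]]_m) k psi phi :
  hform H (k *: psi) phi = k^* * hform H psi phi.
Proof. by rewrite /hform map_mxZ /= linearZ /= -!scalemxAl mxE. Qed.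

Lemma hformZr (R : realType) m (H : 'M[R[i]]_m) k psi phi :
  hform H psi (k *: phi) = k * hform H psi phi.
Proof. by rewrite /hform -scalemxAr mxE. Qed.

Lemma hformNr (R : realType) m (H : 'M[R[i]]_m) psi phi :
  hform H psi (- phi) = - hform H psi phi.
Proof. by rewrite -scaleN1r hformZr mulN1r. Qed.

Lemma hformNl (R : realType) m (H : 'M[R[i]]_m) psi phi :
  hform H (- psi) phi = - hform H psi phi.
Proof. by rewrite -scaleN1r hformZl rmorphN rmorph1 mulN1r. Qed.

Lemma hform_adj1 (R : realType) n m (Gam : 'I_n -> 'M[R[i]]_m) H v psi phi :
  c_compatible Gam H ->
  hform H (cliff_rho Gam v *m psi) phi = hform H psi (cliff_rho Gam v *m phi).
Proof. by move=> hc; have := hc [:: v] psi phi; rewrite /cliff_mono /= big_seq1. Qed.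

Lemma hform_adj2 (R : realType) n m (Gam : 'I_n -> 'M[R[i]]_m) H v u psi phi :
  c_compatible Gam H ->
  hform H (cliff_rho Gam v *m cliff_rho Gam u *m psi) phi =
  hform H psi (cliff_rho Gam u *m cliff_rho Gam v *m phi).
Proof. by move=> hc; have := hc [:: v; u] psi phi; rewrite /cliff_mono /= !big_cons !big_nil !mulr1. Qed.

Lemma parity n : (0 < n)%N -> ~~ odd n -> odd (n./2 + (n - 1) + 'C(n, 2)).
Proof.
move=> n0 ev; have /eqP hn : n == (n./2).*2.
  by rewrite -{1}(odd_double_half n) (negbTE ev) add0n.
move: (n./2) hn => k hn; rewrite hn bin2.
case: k hn => [|k] hn; first by rewrite hn in n0.
rewrite -doubleMl doubleK subn1 doubleS /= !oddD !oddM /= odd_double.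
by case: (odd k).
Qed.

Lemma conj_i (R : realType) : ('i : R[i])^* = - 'i.
Proof. by apply/eqP; rewrite eq_complex /= oppr0 !eqxx. Qed.

Lemma sign_mx (R : realType) m N (A : 'M[R[i]]_m) (H : 'M[R[i]]_m) X Y :
  hform H X (((-1) ^+ N * A) *m Y) = (-1) ^+ N * hform H X (A *m Y).
Proof.
rewrite -signr_odd -[in RHS]signr_odd; case: (odd N).
  by rewrite !expr1 !mulN1r mulNmx hformNr.
by rewrite !expr0 !mul1r.
Qed.

Lemma omega_adj (R : realType) n m (G E : 'M[R]_n) (Gam : 'I_n -> 'M[R[i]]_m) H X Y :
  cliff_rep G Gam -> pseudo_orthonormal_basis G E -> c_compatible Gam H ->
  hform H (omega Gam E *m X) Y = (-1) ^+ 'C(n, 2) * hform H X (omega Gam E *m Y).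
Proof.
move=> hr hb hc; have := hc (map (fun k => row k E) (index_enum 'I_n)) X Y.
rewrite /cliff_mono big_map -map_rev big_map.
rewrite (@prod_rev _ _ (fun k => cliff_rho Gam (row k E))) ?index_enum_uniq //; last first.
  by move=> j k; apply: anti_e.
by rewrite size_ie sign_mx.
Qed.

Lemma conj_mi (R : realType) N : ((- 'i : R[i]) ^+ N)^* = 'i ^+ N.
Proof.
elim: N => [|N IH]; first by rewrite !expr0 conjc1.
rewrite !exprS (conjc_is_multiplicative R).1 IH; congr (_ * _).
by apply/eqP; rewrite eq_complex /= oppr0 opprK !eqxx.
Qed.

Lemma chi_adj (R : realType) n m (G E : 'M[R]_n) (Gam : 'I_n -> 'M[R[i]]_m) H X Y :
  (0 < n)%N -> ~~ odd n ->
  cliff_rep G Gam -> pseudo_orthonormal_basis G E -> c_compatible Gam H ->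
  hform H (chirality Gam E *m X) Y = - hform H X (chirality Gam E *m Y).
Proof.
move=> n0 ev hr hb hc; rewrite /chirality -/(omega Gam E) -!scalemxAl hformZl hformZr.
rewrite (omega_adj _ _ hr hb hc) mulrA -mulNr; congr (_ * _).
rewrite rmorphXn rmorphN /= conjCi opprK.
rewrite [(- _) ^+ (_ + _)]exprNn mulrC -mulNr; congr (_ * _).
have := parity n0 ev; rewrite oddD => hp.
rewrite -signr_odd -[in RHS]signr_odd.
by case: (odd (n./2 + (n - 1))) hp => /= hp; rewrite ?(negbTE hp) ?hp ?expr0 ?expr1 ?opprK.
Qed.

Lemma chi_hw (R : realType) n m (G E : 'M[R]_n) (Gam : 'I_n -> 'M[R[i]]_m) H w X Y :
  (0 < n)%N -> ~~ odd n ->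
  cliff_rep G Gam -> pseudo_orthonormal_basis G E -> c_compatible Gam H ->
  hform H (chirality Gam E *m X) (cliff_rho Gam w *m Y) =
  hform H X (cliff_rho Gam w *m (chirality Gam E *m Y)).
Proof.
move=> n0 ev hr hb hc; rewrite (chi_adj _ _ n0 ev hr hb hc) mulmxA.
rewrite [in RHS]mulmxA; have := v_chi w n0 ev hr hb; rewrite -!mulmxE => ->.
by rewrite mulNmx hformNr.
Qed.

Lemma selfopp (R : realType) (x : R[i]) : x = - x -> x = 0.
Proof.
move/eqP; rewrite -subr_eq0 opprK -mulr2n mulrn_eq0 /= => /eqP //.
Qed.

Lemma part1 (R : realType) n m (G E : 'M[R]_n) (Gam : 'I_n -> 'M[R[i]]_m) H w psi phi :
  (0 < n)%N -> ~~ odd n ->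
  cliff_rep G Gam -> pseudo_orthonormal_basis G E -> c_compatible Gam H ->
  chirality Gam E *m psi = - psi -> chirality Gam E *m phi = phi ->
  hform H psi (cliff_rho Gam w *m phi) = 0 /\ hform H phi (cliff_rho Gam w *m psi) = 0.
Proof.
move=> n0 ev hr hb hc hpsi hphi; split; apply: selfopp.
  have := chi_hw w psi phi n0 ev hr hb hc; rewrite hpsi hphi hformNl => e.
  by rewrite [RHS]e.
have := chi_hw w phi psi n0 ev hr hb hc; rewrite hpsi hphi mulmxN hformNr.
by [].
Qed.
Lemma exists_u (R : realType) n (G E : 'M[R]_n) (w : 'rV[R]_n) :
  (2 < n)%N -> pseudo_orthonormal_basis G E ->
  exists u, quadf G u < 0 /\ bil G w u = 0.
Proof.
move=> n2 hb; have n1 : (1 < n)%N by apply: ltn_trans n2.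
set j1 := Ordinal n1; set j2 := Ordinal n2.
set e1 := row j1 E; set e2 := row j2 E.
have q1 : bil G e1 e1 = -1 by rewrite bil_rows // eqxx.
have q2 : bil G e2 e2 = -1 by rewrite bil_rows // eqxx.
have o12 : bil G e1 e2 = 0 by rewrite bil_rows.
have o21 : bil G e2 e1 = 0 by rewrite bil_rows.
set b1 := bil G w e1; set b2 := bil G w e2.
have [h1|h1] := eqVneq b1 0.
  by exists e1; rewrite quadf_bil q1; split; [rewrite ltrN10|].
exists (b2 *: e1 - b1 *: e2); split.
  rewrite quadf_bil bilD1 !bilD2 ?bilN1 ?bilN2 ?bilZ1 ?bilZ2 ?bilN1 ?bilZ1 q1 q2 o12 o21 -/b1 -/b2.
  have : 0 < b1 ^+ 2 by rewrite exprn_even_gt0.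
  have : 0 <= b2 ^+ 2 by rewrite sqr_ge0.
  nra.
by rewrite bilD2 bilN2 !bilZ2 -/b1 -/b2 mulrC subrr.
Qed.

Lemma eig_inv (R : realType) m (chi a : 'M[R[i]]_m) c (U : 'M[R[i]]_m) :
  chi *m a = a *m chi ->
  (U <= eigsp chi c)%MS -> (U *m a^T <= eigsp chi c)%MS.
Proof.
move=> hca; rewrite /eigsp !sub_kermx => /eqP hU; apply/eqP.
have e : (chi - c%:M) *m a = a *m (chi - c%:M).
  by rewrite mulmxBl mulmxBr hca mul_scalar_mx mul_mx_scalar.
by rewrite -mulmxA -trmx_mul e trmx_mul mulmxA hU mul0mx.
Qed.

Unset Implicit Arguments. Set Strict Implicit.
Theorem lemma7 (R : realType) (n m : nat)
  (G : 'M[R]_n) (E : 'M[R]_n) (Gam : 'I_n -> 'M[R[i]]_m) (H : 'M[R[i]]_m)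
  (w : 'rV[R]_n) :
  (0 < n)%N -> ~~ odd n ->
  G^T = G ->
  pseudo_orthonormal_basis G E ->
  cliff_rep G Gam ->
  nondeg_herm H ->
  c_compatible Gam H ->
  cliff_irreducible Gam ->
  quadf G w < 0 ->
  let chi := chirality Gam E in
  let hw := fun psi phi => hform H psi (cliff_rho Gam w *m phi) in
  (forall psi phi : 'cV[R[i]]_m,
     chi *m psi = - psi -> chi *m phi = phi ->
     hw psi phi = 0 /\ hw phi psi = 0) /\
  ((2 < n)%N ->
     neutral_on hw (eigsp chi (-1)) /\ neutral_on hw (eigsp chi 1)).
Proof.
move=> n0 ev hG hb hr _ hc _ qw chi hw; split.
  by move=> psi phi h1 h2; exact: (part1 w n0 ev hr hb hc h1 h2).
move=> n2; have [u [qu bwu]] := exists_u w n2 hb.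
have buw : bil G u w = 0 by rewrite bilC.
set A := cliff_rho Gam w; set B := cliff_rho Gam u.
set x := (quadf G w)%:C; set y := (quadf G u)%:C.
have hAA : A *m A = x%:M by apply: hr.
have hBB : B *m B = y%:M by apply: hr.
have hAB : A *m B = - (B *m A).
  apply/eqP; rewrite -addr_eq0; have := polar w u hr; rewrite -!mulmxE -/A -/B => ->.
  by rewrite bwu buw addr0 !raddf0.
set a := A *m B; set lam := - (x * y).
have lam0 : lam < 0.
  rewrite oppr_lt0 nmulr_rgt0 -[0]/((0 : R)%:C) ltcR //.
have ua : a \in unitmx.
  have lamn0 : lam != 0 by rewrite lt_eqF.
  suff : a *m (lam^-1 *: a) = 1%:M by case/mulmx1_unit.
  by rewrite -scalemxAr (alg_sq hAA hBB hAB) -/lam -mul_scalar_mx -scalar_mxM mulVf.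
have hca : chi *m a = a *m chi.
  have cA : chi *m A = - (A *m chi).
    by have := v_chi w n0 ev hr hb; rewrite -!mulmxE -/A -/chi => ->; rewrite opprK.
  have cB : chi *m B = - (B *m chi).
    by have := v_chi u n0 ev hr hb; rewrite -!mulmxE -/B -/chi => ->; rewrite opprK.
  by rewrite /a mulmxA cA mulNmx -(mulmxA A chi B) cB mulmxN opprK mulmxA.
have hf : forall z : 'rV_m, hw (z *m a^T)^T (z *m a^T)^T = lam * hw z^T z^T.
  move=> z; rewrite /hw trmx_mul trmxK /a hform_adj2 //.
  rewrite -/A -/B.
  have -> : B *m A *m (A *m (A *m B *m z^T)) = (B *m A *m (A *m (A *m B))) *m z^T.
    by rewrite !mulmxA.
  by rewrite (alg5 hAA hBB hAB) -scalemxAl hformZr.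
split; apply: (neutral_gen lam0 ua) => // U; exact: eig_inv.
Qed.
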